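(* Let $G$ be a connected graph with $n\geq 2$ vertices and $m$ edges. Then for every integer $k\geq 0$, $$R^*(S^k(G))=8^kR^*(G)+\frac{8^k-2^k}{3}m(2m-2n+1).$$
   Context: All graphs are finite, undirected, without loops or multiple edges. For a connected graph $H$ and vertices $i,j$, the resistance distance $\Omega_{ij}$ is the effective resistance between $i$ and $j$ in the electrical network obtained from $H$ by replacing each edge by a unit resistor. With $d_i$ the degree of vertex $i$ in $H$ and the sum over unordered pairs of distinct vertices of $H$, the multiplicative degree-Kirchhoff index is $R^*(H)=\sum_{\{i,j\}\subseteq V(H)}d_id_j\Omega_{ij}$ (degrees and resistances taken in $H$). The subdivision $S(H)$ is the graph obtained from $H$ by replacing every edge with a path of length two. Iterated subdivisions: $S^0(G)=G$ and $S^k(G)=S(S^{k-1}(G))$ for $k\geq1$. *)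

(* Defs.v *)
From HB Require Import structures.
From mathcomp Require Import all_boot all_order all_algebra.
From Stdlib Require Import ClassicalEpsilon.
Set Implicit Arguments. Unset Strict Implicit. Unset Printing Implicit Defensive.
Import Order.TTheory GRing.Theory Num.Theory.

Record sgraph := SGraph {
  vert :> finType;
  adj : rel vert;
  adj_sym : symmetric adj;
  adj_irr : irreflexive adj }.

Definition is_edge (G : sgraph) (E : {set vert G}) : bool :=
  [exists x, exists y, adj x y && (E == [set x; y])].

Definition edge (G : sgraph) := {E : {set vert G} | is_edge E}.

Definition nverts (G : sgraph) : nat := #|vert G|.
Definition nedges (G : sgraph) : nat := #|{: edge G}|.
Definition deg (G : sgraph) (v : vert G) : nat := #|[pred u | adj v u]|.
Definition connected (G : sgraph) : Prop := forall x y : vert G, connect (@adj G) x y.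

(* Subdivision S(G): vertices = old vertices + one new vertex per edge;
   old vertex x is adjacent to the edge-vertex E iff x is an endpoint of E. *)
Definition sub_adj (G : sgraph) : rel (vert G + edge G)%type :=
  fun a b => match a, b with
             | inl x, inr E => x \in val E
             | inr E, inl x => x \in val E
             | _, _ => false
             end.

Lemma sub_adj_sym (G : sgraph) : symmetric (@sub_adj G).
Proof. by case=> [x|E] [y|F]. Qed.

Lemma sub_adj_irr (G : sgraph) : irreflexive (@sub_adj G).
Proof. by case. Qed.

Definition subdiv (G : sgraph) : sgraph :=
  @SGraph (vert G + edge G)%type (@sub_adj G) (@sub_adj_sym G) (@sub_adj_irr G).

Definition subdiv_iter (k : nat) (G : sgraph) : sgraph := iter k subdiv G.

Section Resistance.
Local Open Scope ring_scope.
Variable R : realFieldType.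

(* x is the vector of node potentials when a unit current enters at i and
   leaves at j, every edge being a unit resistor (Kirchhoff + Ohm):
   net current out of v equals the external injection at v. *)
Definition unit_current_potential (G : sgraph) (i j : vert G) (x : vert G -> R) : Prop :=
  forall v : vert G,
    \sum_(u | adj v u) (x v - x u) = (v == i)%:R - (v == j)%:R.

Definition resistance (G : sgraph) (i j : vert G) : R :=
  epsilon (inhabits 0)
    (fun r => exists x, unit_current_potential i j x /\ r = x i - x j).

(* multiplicative degree-Kirchhoff index: sum over unordered pairs {i,j}, i <> j
   (each pair counted once via the enumeration order) *)
Definition Rstar (G : sgraph) : R :=
  \sum_(i : vert G) \sum_(j : vert G | (enum_rank i < enum_rank j)%N)
     (deg i)%:R * (deg j)%:R * resistance i j.
End Resistance.

(* Main.v *)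
Require Import Defs.
From mathcomp Require Import all_boot all_order all_algebra ring zify lra.
From Stdlib Require Import ClassicalEpsilon.
Import GRing.Theory Num.Theory.
Local Open Scope ring_scope.
Set Implicit Arguments. Unset Strict Implicit. Unset Printing Implicit Defensive.

Section Comb.
Variable H : sgraph.

Lemma adj_neq (v u : H) : adj v u -> u != v.
Proof. by move=> a; apply/eqP=> e; move: a; rewrite e (@adj_irr H). Qed.

Lemma is_edge_adj (v u : H) : adj v u -> is_edge [set v; u].
Proof. by move=> a; apply/existsP; exists v; apply/existsP; exists u; rewrite a eqxx. Qed.

Definition mkedge (v u : H) (a : adj v u) : edge H := @exist _ (fun E => is_true (@is_edge H E)) _ (is_edge_adj a).

Lemma edge_card2 (e : edge H) : #|val e| = 2%N.
Proof.
case: e => E /= /existsP[x /existsP[y /andP[a /eqP ->]]].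
by rewrite cards2 eq_sym (adj_neq a).
Qed.

Lemma edgeP (e : edge H) (v : H) : v \in val e -> exists u, adj v u /\ val e = [set v; u].
Proof.
case: e => E /= /existsP[x /existsP[y /andP[a /eqP ->]]].
rewrite in_set2 => /orP[] /eqP ->; first by exists y.
by exists x; rewrite setUC (@adj_sym H).
Qed.

Lemma set2_inj (v u u' : H) : u != v -> u' != v -> [set v; u] = [set v; u'] -> u = u'.
Proof.
move=> nu nu' E; have : u \in [set v; u'] by rewrite -E set22.
by rewrite in_set2 (negbTE nu) => /eqP.
Qed.

Lemma nbr_sum (V : nmodType) (v : H) (F : {set H} -> V) :
  \sum_(e : edge H | v \in val e) F (val e) = \sum_(u | adj v u) F [set v; u].
Proof.
pose c (e : edge H) (u : H) := adj v u && (val e == [set v; u]).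
transitivity (\sum_(e : edge H) \sum_(u | c e u) F [set v; u]).
  rewrite big_mkcond; apply: eq_bigr => e _.
  case: ifP => ve.
    have [u0 [a0 E0]] := edgeP ve.
    rewrite (big_pred1 u0) ?E0 // => u; rewrite /c E0 /=.
    apply/andP/eqP => [[a /eqP E]|->]; last by rewrite a0 eqxx.
    by apply: (set2_inj (adj_neq a) (adj_neq a0)); rewrite E.
  rewrite big_pred0 // => u; rewrite /c; apply/andP => [[_ /eqP E]].
  by move: ve; rewrite E set21.
rewrite (exchange_big_dep (fun u => adj v u)) /=; last by move=> e u _ /andP[].
apply: eq_bigr => u a.
rewrite (big_pred1 (mkedge a)) // => e /=; rewrite /c a /=.
by apply/eqP/eqP => [E|-> //]; apply: val_inj.
Qed.
End Comb.

Section Comb2.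
Variable H : sgraph.

Lemma deg_inl (v : H) : @deg (subdiv H) (inl v) = deg v.
Proof.
rewrite /deg -!sum1_card big_sumType /= big_pred0 // add0n.
exact: (@nbr_sum H nat v (fun _ => 1%N)).
Qed.

Lemma deg_inr (e : edge H) : @deg (subdiv H) (inr e) = 2%N.
Proof.
rewrite /deg -sum1_card big_sumType /= [X in (_ + X)%N]big_pred0 // addn0.
by rewrite (eq_bigl (mem (val e))) ?sum1_card ?edge_card2.
Qed.

Variable R : realFieldType.

Lemma sum_const_adj (c : R) (v : H) : \sum_(u | adj v u) c = (deg v)%:R * c.
Proof.
have -> : \sum_(u | adj v u) c = \sum_(u in [pred u | adj v u]) c by [].
by rewrite sumr_const mulr_natl.
Qed.

Lemma sum_const_edge (c : R) (e : edge H) : \sum_(a in val e) c = 2 * c.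
Proof. by rewrite sumr_const edge_card2 mulr_natl. Qed.

Lemma nbr_sum2 (v : H) (F : H -> R) :
  \sum_(e : edge H | v \in val e) \sum_(a in val e) F a = (deg v)%:R * F v + \sum_(u | adj v u) F u.
Proof.
rewrite (nbr_sum v (fun E => \sum_(a in E) F a)).
rewrite (eq_bigr (fun u => F v + F u)); last first.
  move=> u a; rewrite big_setU1 ?big_set1 // inE eq_sym adj_neq //.
by rewrite big_split /= sum_const_adj.
Qed.

Lemma nbr_count (v : H) : \sum_(e : edge H | v \in val e) (1 : R) = (deg v)%:R.
Proof. by rewrite (nbr_sum v (fun _ => (1:R))) sum_const_adj mulr1. Qed.

Lemma edge_sum (F : H -> R) :
  \sum_(e : edge H) \sum_(a in val e) F a = \sum_(v : H) (deg v)%:R * F v.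
Proof.
rewrite (exchange_big_dep predT) //=; apply: eq_bigr => v _.
by rewrite -nbr_count big_distrl /=; apply: eq_bigr => e _; rewrite mul1r.
Qed.

Lemma sum_adj_swap (F : H -> H -> R) :
  \sum_(v : H) \sum_(u | adj v u) F v u = \sum_(v : H) \sum_(u | adj v u) F u v.
Proof.
rewrite (exchange_big_dep predT) //=; apply: eq_bigr => v _; apply: eq_bigl => u.
by rewrite (@adj_sym H).
Qed.

Lemma handshake : \sum_(v : H) (deg v)%:R = 2 * (nedges H)%:R :> R.
Proof.
have := edge_sum (fun _ => 1); rewrite (eq_bigr (fun _ => 2)) => [|e _]; last first.
  by rewrite sum_const_edge mulr1.
rewrite sumr_const => E; rewrite /nedges mulr_natr (eq_bigr (fun v => (deg v)%:R * 1)) -?E //; by move=> *; rewrite mulr1.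
Qed.
End Comb2.

Section Lap.
Variable R : realFieldType.

Definition Lap (H : sgraph) (x : H -> R) (v : H) := \sum_(u | adj v u) (x v - x u).

Lemma harm_const (H : sgraph) (x : H -> R) :
  connected H -> (forall v, Lap x v = 0) -> forall u v, x u = x v.
Proof.
move=> cH hx.
have S1 : \sum_(v : H) \sum_(u | adj v u) x v * (x v - x u) = 0.
  rewrite (eq_bigr (fun v => x v * Lap x v)); last by move=> v _; rewrite /Lap mulr_sumr.
  by rewrite big1 // => v _; rewrite hx mulr0.
have S2 := sum_adj_swap (fun v u => x v * (x v - x u)).
have E : \sum_(v : H) \sum_(u | adj v u) (x v - x u) ^+ 2 = 0.
  transitivity (\sum_(v : H) \sum_(u | adj v u) x v * (x v - x u)
     + \sum_(v : H) \sum_(u | adj v u) x u * (x u - x v)); last by rewrite -S2 S1 addr0.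
  rewrite -big_split /=; apply: eq_bigr => v _.
  rewrite (eq_bigr (fun u => x v * (x v - x u) + x u * (x u - x v))); last by move=> u _; ring.
  by rewrite big_split.
have adjE : forall v u, adj v u -> x v = x u.
  move=> v u a.
  have h1 := psumr_eq0P (fun v _ => sumr_ge0 _ (fun u _ => sqr_ge0 (x v - x u))) E.
  have h2 := psumr_eq0P (fun u _ => sqr_ge0 (x v - x u)) (h1 v isT).
  by apply/eqP; rewrite -subr_eq0 -sqrf_eq0 h2.
move=> u v; have := cH u v; move/connectP=> [p pth ->].
elim: p u pth => //= w p IH u /andP[a pth].
by rewrite (adjE _ _ a) (IH _ pth).
Qed.

Definition Lfun (H : sgraph) (u w : H) : R := (u == w)%:R * (deg u)%:R - (adj u w)%:R.

Lemma sum_adjR (H : sgraph) (w : H) (f : H -> R) :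
  \sum_u (adj w u)%:R * f u = \sum_(u | adj w u) f u.
Proof. by rewrite [RHS]big_mkcond; apply: eq_bigr => u _; case: (adj w u); rewrite ?mul1r ?mul0r. Qed.

Lemma Lfun_col (H : sgraph) (x : H -> R) (w : H) : \sum_u x u * Lfun u w = Lap x w.
Proof.
rewrite /Lfun /Lap sumrB.
under eq_bigr do rewrite mulrBr.
rewrite sumrB (bigD1 w) //= eqxx mul1r big1 => [|u /negbTE ->]; last by rewrite mul0r mulr0.
rewrite addr0 sum_const_adj -(sum_adjR w x); congr (_ - _); first by rewrite mulrC.
by apply: eq_bigr => u _; rewrite mulrC (@adj_sym H).
Qed.

Lemma Lfun_row (H : sgraph) (w : H) : \sum_u Lfun w u = 0.
Proof.
rewrite /Lfun sumrB (bigD1 w) //= eqxx mul1r big1 => [|u]; last by rewrite eq_sym => /negbTE ->; rewrite mul0r.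
rewrite addr0 (eq_bigr (fun u => (adj w u)%:R * 1)) ?sum_adjR ?sum_const_adj ?mulr1 ?subrr //.
by move=> u _; rewrite mulr1.
Qed.

Lemma sum_ev (H : finType) (f : H -> R) : \sum_(i < #|H|) f (enum_val i) = \sum_u f u.
Proof. by rewrite -big_enum_val. Qed.

Lemma lap_exists (H : sgraph) (b : H -> R) :
  connected H -> \sum_v b v = 0 -> exists x : H -> R, forall v, Lap x v = b v.
Proof.
move=> cH sb.
case: (pickP (fun _ : H => true)) => [v0 _|none]; last first.
  by exists (fun _ => 0) => v; have := none v.
pose n := #|H|.
pose ev (i : 'I_n) : H := enum_val i.
have evK : forall v, ev (enum_rank v) = v by move=> v; rewrite /ev enum_rankK.
have evI : forall i, enum_rank (ev i) = i by move=> i; rewrite /ev enum_valK.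
have n0 : (0 < n)%N by apply/card_gt0P; exists v0.
pose Lm : 'M[R]_n := \matrix_(i, j) Lfun (ev i) (ev j).
have mulL : forall D : 'rV[R]_n, forall j,
    (D *m Lm) 0 j = Lap (fun v => D 0 (enum_rank v)) (ev j).
  move=> D j; rewrite mxE -Lfun_col -[RHS]sum_ev; apply: eq_bigr => i _.
  by rewrite mxE evI.
have kerL : (kermx Lm <= (const_mx 1 : 'rV[R]_n))%MS.
  apply/row_subP => i; set D := row i (kermx Lm).
  have DL : D *m Lm = 0 by rewrite /D -row_mul mulmx_ker row0.
  have hx : forall v, Lap (fun v => D 0 (enum_rank v)) v = 0.
    by move=> v; rewrite -(evK v) -mulL DL mxE.
  have cx := harm_const cH hx.
  have -> : D = D 0 (enum_rank v0) *: const_mx 1.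
    apply/matrixP => a c; rewrite (ord1 a) [in RHS]mxE [const_mx _ _ _]mxE mulr1.
    by rewrite -(cx (ev c)) evI.
  by apply: scalemx_sub; apply: submx_refl.
have rk1 : (n - \rank Lm <= 1)%N.
  rewrite -mxrank_ker; apply: leq_trans (mxrankS kerL) _; exact: rank_leq_row.
pose oc : 'cV[R]_n := const_mx 1.
have Loc : Lm *m oc = 0.
  apply/matrixP => i j; rewrite [RHS]mxE.
  transitivity (\sum_u Lfun (ev i) u); last exact: Lfun_row.
  rewrite mxE -[RHS]sum_ev; apply: eq_bigr => k _; rewrite !mxE mulr1.
  by rewrite /ev.
have LK : (Lm <= kermx oc)%MS by rewrite sub_kermx Loc.
have rko : (1 <= \rank oc)%N.
  rewrite lt0n mxrank_eq0; apply/eqP => /matrixP /(_ (Ordinal n0) 0).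
  by rewrite !mxE => /eqP; rewrite oner_eq0.
have rkK : \rank (kermx oc) = \rank Lm.
  apply/eqP; rewrite eq_sym eqn_leq mxrankS //= mxrank_ker.
  by move: rk1 rko (rank_leq_row Lm); rewrite /n; lia.
have KL : (kermx oc <= Lm)%MS by rewrite -(mxrank_leqif_sup LK).2 rkK.
pose br : 'rV[R]_n := \row_j b (ev j).
have bK : (br <= kermx oc)%MS.
  rewrite sub_kermx; apply/eqP/matrixP => i j; rewrite [RHS]mxE.
  transitivity (\sum_v b v); last exact: sb.
  rewrite mxE -[RHS]sum_ev.
  by apply: eq_bigr => k _; rewrite !mxE mulr1.
have /submxP [D eD] := submx_trans bK KL.
exists (fun v => D 0 (enum_rank v)) => v.
by rewrite -{1}(evK v) -mulL -eD mxE evK.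
Qed.

Definition green (H : sgraph) (D : R) (g : H -> H -> R) :=
  forall v k, Lap (fun w => g w k) v = (v == k)%:R - (deg v)%:R / D.

Lemma resistance_green (H : sgraph) D g : connected H -> green D g ->
  forall i j : H, resistance R i j = g i i + g j j - g i j - g j i.
Proof.
move=> cH gG i j.
pose x v := g v i - g v j.
have px : unit_current_potential i j x.
  move=> v; have := gG v i; have := gG v j; rewrite /Lap => h2 h1.
  rewrite (eq_bigr (fun u => (g v i - g u i) - (g v j - g u j))); last by move=> u _; rewrite /x; ring.
  by rewrite sumrB h1 h2; ring.
have [x' [px' ->]] : exists x', unit_current_potential i j x' /\ resistance R i j = x' i - x' j.
  by apply: (epsilon_spec (inhabits 0) (fun r => exists x, unit_current_potential i j x /\ r = x i - x j)); exists (x i - x j), x.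
have hy : forall v, Lap (fun w => x w - x' w) v = 0.
  move=> v; rewrite /Lap (eq_bigr (fun u => (x v - x u) - (x' v - x' u))); last by move=> u _; ring.
  by rewrite sumrB px px' subrr.
have := harm_const cH hy i j; rewrite /x => e.
lra.
Qed.
End Lap.

Section RS.
Variable R : realFieldType.

Lemma half_pairs (T : finType) (F : T -> T -> R) :
  (forall i j, F i j = F j i) -> (forall i, F i i = 0) ->
  \sum_i \sum_(j | (enum_rank i < enum_rank j)%N) F i j = (\sum_i \sum_j F i j) / 2.
Proof.
move=> Fs F0.
have E : forall i, \sum_j F i j = \sum_(j | (enum_rank i < enum_rank j)%N) F i j
                               + \sum_(j | (enum_rank j < enum_rank i)%N) F i j.
  move=> i; rewrite (bigID (fun j => (enum_rank i < enum_rank j)%N)) /=; congr (_ + _).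
  rewrite (bigD1 i) /= ?ltnn // F0 add0r; apply: eq_bigl => j.
  have [h|h|h] := ltngtP (enum_rank i) (enum_rank j).
  - by [].
  - by rewrite /=; apply/eqP => ji; move: h; rewrite ji ltnn.
  - have ij : i = j by apply: enum_rank_inj; apply: val_inj.
    by rewrite ij eqxx.
have S : \sum_i \sum_(j | (enum_rank j < enum_rank i)%N) F i j
       = \sum_i \sum_(j | (enum_rank i < enum_rank j)%N) F i j.
  rewrite (exchange_big_dep predT) //=; apply: eq_bigr => i _; apply: eq_bigr => j _.
  exact: Fs.
rewrite (eq_bigr _ (fun i _ => E i)) big_split /= S; lra.
Qed.

Lemma sum4 (T : finType) (a b c e : T -> T -> R) :
  \sum_i \sum_j (a i j + b i j - c i j - e i j) =
  \sum_i \sum_j a i j + \sum_i \sum_j b i j - \sum_i \sum_j c i j - \sum_i \sum_j e i j.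
Proof.
have E : forall i, \sum_j (a i j + b i j - c i j - e i j) =
    \sum_j a i j + \sum_j b i j - \sum_j c i j - \sum_j e i j.
  by move=> i; rewrite !sumrB big_split.
by rewrite (eq_bigr _ (fun i _ => E i)) !sumrB big_split.
Qed.

Lemma Rstar_green (H : sgraph) D g : connected H -> green D g ->
  Rstar R H = (\sum_(v : H) (deg v)%:R) * (\sum_(v : H) (deg v)%:R * g v v)
              - \sum_(v : H) \sum_(j : H) (deg v)%:R * (deg j)%:R * g v j.
Proof.
move=> cH gG; rewrite /Rstar.
pose F (i j : H) : R := (deg i)%:R * (deg j)%:R * (g i i + g j j - g i j - g j i).
rewrite (eq_bigr (fun i => \sum_(j | (enum_rank i < enum_rank j)%N) F i j)); last first.
  by move=> i _; apply: eq_bigr => j _; rewrite (resistance_green cH gG).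
rewrite half_pairs; last 2 first.
- by move=> i j; rewrite /F; ring.
- by move=> i; rewrite /F; ring.
rewrite (eq_bigr (fun i => \sum_j ((deg i)%:R * (deg j)%:R * g i i + (deg i)%:R * (deg j)%:R * g j j
     - (deg i)%:R * (deg j)%:R * g i j - (deg i)%:R * (deg j)%:R * g j i))); last first.
  by move=> i _; apply: eq_bigr => j _; rewrite /F; ring.
rewrite sum4.
set Ds := \sum_(v : H) (deg v)%:R; set X := \sum_(v : H) (deg v)%:R * g v v.
set Q := \sum_(v : H) \sum_(j : H) (deg v)%:R * (deg j)%:R * g v j.
have A1 : \sum_(i : H) \sum_(j : H) (deg i)%:R * (deg j)%:R * g i i = X * Ds.
  rewrite /X mulr_suml; apply: eq_bigr => i _; rewrite /Ds mulr_sumr.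
  by apply: eq_bigr => j _; ring.
have A2 : \sum_(i : H) \sum_(j : H) (deg i)%:R * (deg j)%:R * g j j = X * Ds.
  rewrite exchange_big /X mulr_suml; apply: eq_bigr => i _; rewrite /Ds mulr_sumr.
  by apply: eq_bigr => j _; ring.
have A4 : \sum_(i : H) \sum_(j : H) (deg i)%:R * (deg j)%:R * g j i = Q.
  rewrite exchange_big /Q; apply: eq_bigr => i _; apply: eq_bigr => j _; ring.
rewrite A1 A2 A4; lra.
Qed.
End RS.

Section Step.
Variable R : realFieldType.
Variable H : sgraph.
Notation S := (subdiv H).

Lemma eq_ll (a b : H) : (inl a == inl b :> S) = (a == b).
Proof. by apply/eqP/eqP => [[]|->]. Qed.
Lemma eq_rr (a b : edge H) : (inr a == inr b :> S) = (a == b).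
Proof. by apply/eqP/eqP => [[]|->]. Qed.
Lemma eq_lr (a : H) (b : edge H) : (inl a == inr b :> S) = false.
Proof. by apply/eqP. Qed.
Lemma eq_rl (a : H) (b : edge H) : (inr b == inl a :> S) = false.
Proof. by apply/eqP. Qed.

Lemma Lap_inl (x : S -> R) (v : H) :
  Lap x (inl v : S) = \sum_(e : edge H | v \in val e) (x (inl v) - x (inr e)).
Proof. by rewrite /Lap big_sumType /= big_pred0 // add0r. Qed.

Lemma Lap_inr (x : S -> R) (e : edge H) :
  Lap x (inr e : S) = \sum_(a in val e) (x (inr e) - x (inl a)).
Proof. by rewrite /Lap big_sumType /= [X in _ + X]big_pred0 // addr0. Qed.

Lemma sum_delta_in (A : {set H}) (v : H) : \sum_(c in A) (v == c)%:R = (v \in A)%:R :> R.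
Proof.
case: (boolP (v \in A)) => h.
  rewrite (bigD1 v) //= eqxx big1 ?addr0 // => c /andP[_ /negbTE]; by rewrite eq_sym => ->.
by rewrite big1 // => c cA; case: eqP => // e; rewrite e cA in h.
Qed.

Lemma sum_edge_delta (v : H) (f : edge H) :
  \sum_(e : edge H | v \in val e) (e == f)%:R = (v \in val f)%:R :> R.
Proof.
case: (boolP (v \in val f)) => h.
  rewrite (bigD1 f) //= eqxx big1 ?addr0 // => c /andP[_ /negbTE] -> //.
by rewrite big1 // => c cA; case: eqP => // e; rewrite -e cA in h.
Qed.

Lemma nbr_const (c : R) (v : H) : \sum_(e : edge H | v \in val e) c = (deg v)%:R * c.
Proof. by rewrite -nbr_count mulr_suml; apply: eq_bigr => e _; rewrite mul1r. Qed.

Lemma edge_exch (G : H -> edge H -> R) :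
  \sum_(e : edge H) \sum_(a in val e) G a e = \sum_(a : H) \sum_(e : edge H | a \in val e) G a e.
Proof. by rewrite (exchange_big_dep predT). Qed.

Lemma sumS (F : S -> R) : \sum_(p : S) F p = \sum_(v : H) F (inl v) + \sum_(e : edge H) F (inr e).
Proof. by rewrite big_sumType. Qed.

Definition gS (g : H -> H -> R) (M : R) (p q : S) : R :=
  match p, q with
  | inl v, inl j => 2 * g v j
  | inr e, inl j => \sum_(a in val e) g a j - (4 * M)^-1
  | inl v, inr f => \sum_(c in val f) g v c
  | inr e, inr f => (\sum_(a in val e) \sum_(c in val f) g a c) / 2 - (4 * M)^-1 + (e == f)%:R / 2
  end.

Lemma gS_green g M : M != 0 -> green (2 * M) g -> green (H:=S) (4 * M) (gS g M).
Proof.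
move=> M0 gG.
have hG : forall v k, (deg v)%:R * g v k - \sum_(u | adj v u) g u k = (v == k)%:R - (deg v)%:R / (2 * M).
  by move=> v k; rewrite -gG /Lap sumrB sum_const_adj.
case=> [v|e] [j|f].
- rewrite Lap_inl deg_inl eq_ll.
  rewrite (eq_bigr (fun e : edge H => (2 * g v j + (4 * M)^-1) - \sum_(a in val e) g a j)); last by move=> e _ /=; ring.
  rewrite sumrB nbr_const nbr_sum2.
  have E : \sum_(u | adj v u) g u j = (deg v)%:R * g v j - ((v == j)%:R - (deg v)%:R / (2 * M)).
    by rewrite -hG; ring.
  rewrite E; field; exact: M0.
- rewrite Lap_inl deg_inl eq_lr.
  pose h a := \sum_(c in val f) g a c.
  rewrite (eq_bigr (fun e : edge H => (h v + (4 * M)^-1) - (\sum_(a in val e) h a) / 2 - (e == f)%:R / 2)); last by move=> e _; rewrite /h /=; ring.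
  rewrite !sumrB -!mulr_suml nbr_const nbr_sum2 sum_edge_delta.
  have E : \sum_(u | adj v u) h u = (deg v)%:R * h v - ((v \in val f)%:R - 2 * ((deg v)%:R / (2 * M))).
    rewrite /h exchange_big (eq_bigr (fun c => (deg v)%:R * g v c - ((v == c)%:R - (deg v)%:R / (2 * M)))); last first.
      by move=> c _; rewrite -hG; ring.
    by rewrite sumrB -mulr_sumr sumrB sum_delta_in sum_const_edge.
  rewrite E /=; field; exact: M0.
- rewrite Lap_inr deg_inr eq_rl /=.
  rewrite sumrB sum_const_edge -mulr_sumr; field; exact: M0.
- rewrite Lap_inr deg_inr eq_rr /=.
  rewrite sumrB sum_const_edge; field; exact: M0.
Qed.
End Step.

Section Conn.
Variable H : sgraph.

Lemma nedges_pos : connected H -> (2 <= nverts H)%N -> (0 < nedges H)%N.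
Proof.
move=> cH /card_gt1P [x [y [_ _ nxy]]].
move: (cH x y) => /connectP [[|p0 p] /= pth ey]; first by rewrite ey eqxx in nxy.
move: pth => /andP [a _].
by apply/card_gt0P; exists (mkedge a).
Qed.

Lemma subdiv_connected : connected H -> connected (subdiv H).
Proof.
move=> cH.
have symS : connect_sym (@adj (subdiv H)) by apply: sym_connect_sym; exact: (@adj_sym (subdiv H)).
have stepS : forall v u : H, adj v u -> connect (@adj (subdiv H)) (inl v) (inl u).
  move=> v u a; apply: (@connect_trans _ _ (inr (mkedge a))); apply: connect1 => /=.
    by rewrite set21.
  by rewrite set22.
have LL : forall v u : H, connect (@adj (subdiv H)) (inl v) (inl u).
  move=> v u; move: (cH v u) => /connectP [p pth ->].
  elim: p v pth => [|w p IH] v /=; first by rewrite connect0.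
  by move=> /andP [a pth]; apply: connect_trans (stepS _ _ a) (IH _ pth).
have toL : forall q : subdiv H, exists v : H, connect (@adj (subdiv H)) q (inl v).
  case=> [v|e]; first by exists v; rewrite connect0.
  have : (0 < #|val e|)%N by rewrite edge_card2.
  move=> /card_gt0P [a ae]; exists a; apply: connect1 => /=; exact: ae.
move=> p q; have [v pv] := toL p; have [u qu] := toL q.
apply: connect_trans pv _; apply: connect_trans (LL v u) _.
by rewrite symS.
Qed.
End Conn.

Section Main.
Variable R : realFieldType.
Variable H : sgraph.
Notation S := (subdiv H).

Lemma sum_delta (k : H) : \sum_(v : H) (v == k)%:R = 1 :> R.
Proof. by rewrite (bigD1 k) //= eqxx big1 ?addr0 // => u /negbTE ->. Qed.

Lemma sum_eq1 (e : edge H) : \sum_(f : edge H) (e == f)%:R = 1 :> R.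
Proof. by rewrite (bigD1 e) //= eqxx big1 ?addr0 // => u; rewrite eq_sym => /negbTE ->. Qed.

Lemma edge_sum2 (F : H -> H -> R) :
  \sum_(e : edge H) \sum_(f : edge H) \sum_(a in val e) \sum_(c in val f) F a c
  = \sum_(a : H) \sum_(c : H) (deg a)%:R * (deg c)%:R * F a c.
Proof.
transitivity (\sum_(e : edge H) \sum_(a in val e) \sum_(c : H) (deg c)%:R * F a c).
  apply: eq_bigr => e _; rewrite exchange_big; apply: eq_bigr => a _.
  exact: (edge_sum (fun c => F a c)).
rewrite (edge_sum (fun a => \sum_(c : H) (deg c)%:R * F a c)); apply: eq_bigr => a _.
by rewrite mulr_sumr; apply: eq_bigr => c _; ring.
Qed.

Lemma step : connected H -> (2 <= nverts H)%N ->
  Rstar R S = 8 * Rstar R H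
    + 2 * (nedges H)%:R * (2 * (nedges H)%:R - 2 * (nverts H)%:R + 1).
Proof.
move=> cH n2.
set M : R := (nedges H)%:R; set N : R := (nverts H)%:R.
have M0 : M != 0 by rewrite /M pnatr_eq0 -lt0n nedges_pos.
have hs : \sum_(v : H) (deg v)%:R = 2 * M := @handshake H R.
pose b k (v : H) : R := (v == k)%:R - (deg v)%:R / (2 * M).
have ex : forall k, exists x : H -> R, forall v, Lap x v = b k v.
  move=> k; apply: lap_exists cH _.
  rewrite sumrB sum_delta -mulr_suml hs mulfV ?subrr //.
  by rewrite mulf_neq0 // pnatr_eq0.
have [gc gcP] := fin_all_exists ex.
pose g (v k : H) := gc k v.
have gG : green (2 * M) g by move=> v k; rewrite /g gcP.
have gSG := gS_green M0 gG.
have cS := subdiv_connected cH.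
rewrite (Rstar_green cH gG) (Rstar_green cS gSG) hs.
set X := \sum_(v : H) (deg v)%:R * g v v.
set Q := \sum_(v : H) \sum_(j : H) (deg v)%:R * (deg j)%:R * g v j.
set w : R := (4 * M)^-1.
have hsS : \sum_(p : S) (deg p)%:R = 4 * M.
  rewrite sumS (eq_bigr (fun v => (deg v)%:R)) => [|v _]; last by rewrite deg_inl.
  rewrite [X in _ + X](eq_bigr (fun e => 2)) => [|e _]; last by rewrite deg_inr.
  rewrite hs sumr_const -mulr_natr /M /nedges; ring.
set A := \sum_(a : H) \sum_(u | adj a u) g a u.
have FA : A = X - N + 1.
  have F1 : \sum_(a : H) ((deg a)%:R * g a a - \sum_(u | adj a u) g u a)
          = \sum_(a : H) (1 - (deg a)%:R / (2 * M)).
    apply: eq_bigr => a _; have := gG a a; rewrite /Lap sumrB sum_const_adj eqxx => -> //.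
  move: F1; rewrite !sumrB -mulr_suml hs mulfV; last by rewrite mulf_neq0 // pnatr_eq0.
  rewrite sumr_const -(sum_adj_swap (fun a u => g a u)) -/X -/A.
  have -> : (1 : R) *+ #|H| = N by rewrite /N /nverts.
  move=> e; lra.
have TS : \sum_(p : S) (deg p)%:R * gS g M p p = 3 * X + A + M - M * 2 * w.
  rewrite sumS.
  have T1 : \sum_(v : H) (deg (inl v : S))%:R * gS g M (inl v) (inl v) = 2 * X.
    rewrite /X mulr_sumr; apply: eq_bigr => v _; rewrite deg_inl /=; ring.
  have T2 : \sum_(e : edge H) (deg (inr e : S))%:R * gS g M (inr e) (inr e)
          = (X + A) + M * (1 - 2 * w).
    rewrite (eq_bigr (fun e : edge H => (\sum_(a in val e) \sum_(c in val e) g a c) + (1 - 2 * w)));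
      last by move=> e _; rewrite deg_inr /gS /= eqxx /= /w; field; try exact: M0.
    rewrite big_split /= sumr_const -mulr_natr -/M; congr (_ + _); last by ring.
    rewrite (edge_exch (fun a e => \sum_(c in val e) g a c)).
    rewrite (eq_bigr (fun a => (deg a)%:R * g a a + \sum_(u | adj a u) g a u)); last first.
      by move=> a _; rewrite (nbr_sum2 a (fun c => g a c)).
    by rewrite big_split.
  rewrite T1 T2; ring.
have QS : \sum_(p : S) \sum_(q : S) (deg p)%:R * (deg q)%:R * gS g M p q = 8 * Q.
  under eq_bigr do rewrite sumS.
  rewrite sumS !big_split /=.
  have Q1 : \sum_(v : H) \sum_(j : H) (deg (inl v : S))%:R * (deg (inl j : S))%:R * gS g M (inl v) (inl j) = 2 * Q.
    rewrite /Q mulr_sumr; apply: eq_bigr => v _; rewrite mulr_sumr; apply: eq_bigr => j _.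
    rewrite !deg_inl /=; ring.
  have Q2 : \sum_(v : H) \sum_(f : edge H) (deg (inl v : S))%:R * (deg (inr f : S))%:R * gS g M (inl v) (inr f) = 2 * Q.
    rewrite /Q mulr_sumr; apply: eq_bigr => v _.
    rewrite (eq_bigr (fun f : edge H => (2 * (deg v)%:R) * \sum_(c in val f) g v c)); last first.
      by move=> f _; rewrite deg_inl deg_inr /=; ring.
    rewrite -mulr_sumr (edge_sum (fun c => g v c)) !mulr_sumr; apply: eq_bigr => j _; ring.
  have Q3 : \sum_(e : edge H) \sum_(j : H) (deg (inr e : S))%:R * (deg (inl j : S))%:R * gS g M (inr e) (inl j)
          = 2 * Q - 2 * M * w * (2 * M).
    rewrite exchange_big.
    rewrite (eq_bigr (fun j => 2 * (deg j)%:R * \sum_(a : H) (deg a)%:R * g a j - 2 * M * w * (deg j)%:R)); last first.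
      move=> j _.
      rewrite (eq_bigr (fun e : edge H => 2 * (deg j)%:R * \sum_(a in val e) g a j - 2 * (deg j)%:R * w)); last first.
        by move=> e _; rewrite deg_inl deg_inr /= /w; ring.
      rewrite sumrB -mulr_sumr (edge_sum (fun a => g a j)) sumr_const -mulr_natr -/M; ring.
    rewrite sumrB -mulr_sumr hs; congr (_ - _).
    rewrite /Q exchange_big mulr_sumr; apply: eq_bigr => j _; rewrite !mulr_sumr.
    by apply: eq_bigr => a _; ring.
  have Q4 : \sum_(e : edge H) \sum_(f : edge H) (deg (inr e : S))%:R * (deg (inr f : S))%:R * gS g M (inr e) (inr f)
          = 2 * Q - 4 * w * M * M + 2 * M.
    have E : forall e f : edge H, (deg (inr e : S))%:R * (deg (inr f : S))%:R * gS g M (inr e) (inr f)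
          = 2 * (\sum_(a in val e) \sum_(c in val f) g a c) - 4 * w + 2 * (e == f)%:R.
      by move=> e f; rewrite !deg_inr /= /w; field.
    rewrite (eq_bigr (fun e : edge H => 2 * (\sum_(f : edge H) \sum_(a in val e) \sum_(c in val f) g a c) + (2 - 4 * w * M))); last first.
      move=> e _; rewrite (eq_bigr _ (fun f _ => E e f)).
      rewrite big_split sumrB /= sumr_const -!mulr_sumr sum_eq1 -mulr_natr -/M; ring.
    rewrite big_split /= -mulr_sumr edge_sum2 sumr_const -mulr_natr -/M -/Q; ring.
  rewrite Q1 Q2 Q3 Q4 /w; field; exact: M0.
rewrite hsS TS QS FA /w; field; exact: M0.
Qed.
End Main.
Unset Implicit Arguments.

Lemma nedges_subdiv (R : realFieldType) (H : sgraph) :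
  (nedges (subdiv H))%:R = 2 * (nedges H)%:R :> R.
Proof.
have := @handshake (subdiv H) R.
rewrite sumS (eq_bigr (fun v => (deg v)%:R)) => [|v _]; last by rewrite deg_inl.
rewrite [X in _ + X](eq_bigr (fun e => 2)) => [|e _]; last by rewrite deg_inr.
rewrite handshake sumr_const -mulr_natr /nedges => h; lra.
Qed.

Lemma nverts_subdiv (R : realFieldType) (H : sgraph) :
  (nverts (subdiv H))%:R = (nverts H)%:R + (nedges H)%:R :> R.
Proof. by rewrite /nverts /nedges /= card_sum natrD. Qed.

Theorem theorem3p2 (R : realFieldType) (G : sgraph) (k : nat) :
  connected G -> (2 <= nverts G)%N ->
  Rstar R (subdiv_iter k G) =
    8 ^+ k * Rstar R G
    + (8 ^+ k - 2 ^+ k) / 3 * (nedges G)%:R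
      * (2 * (nedges G)%:R - 2 * (nverts G)%:R + 1).
Proof.
move=> cG n2.
set c : R := (nedges G)%:R * (2 * (nedges G)%:R - 2 * (nverts G)%:R + 1).
suff : [/\ connected (subdiv_iter k G), (2 <= nverts (subdiv_iter k G))%N,
   (nedges (subdiv_iter k G))%:R * (2 * (nedges (subdiv_iter k G))%:R
        - 2 * (nverts (subdiv_iter k G))%:R + 1) = 2 ^+ k * c
 & Rstar R (subdiv_iter k G) = 8 ^+ k * Rstar R G + (8 ^+ k - 2 ^+ k) / 3 * c].
  by case=> _ _ _ ->; rewrite /c mulrA.
elim: k => [|k [cK nK eK rK]].
  by split => //; rewrite /c /= !expr0 ?mul1r // subrr mul0r mul0r addr0.
have -> : subdiv_iter k.+1 G = subdiv (subdiv_iter k G) by [].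
set Hk := subdiv_iter k G.
split.
- exact: subdiv_connected.
- rewrite /nverts /= card_sum; apply: leq_trans nK _; exact: leq_addr.
- rewrite nedges_subdiv nverts_subdiv exprS; transitivity (2 * (2 ^+ k * c)); last by ring.
  rewrite -eK; ring.
- rewrite (step R cK nK) rK.
  transitivity (8 * (8 ^+ k * Rstar R G + (8 ^+ k - 2 ^+ k) / 3 * c) + 2 * ((nedges Hk)%:R * (2 * (nedges Hk)%:R - 2 * (nverts Hk)%:R + 1))); first by ring.
  by rewrite eK !exprS; field.
Qed.
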